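(* For every positive integer $n$, $\mathrm{Sort}_n(\mathrm{SC}_{\underline{32}1})=\mathrm{Av}_n(\underline{123},132)$; that is, $\tau\in\mathfrak S_n$ satisfies $s(\mathrm{SC}_{\underline{32}1}(\tau))=12\cdots n$ if and only if $\tau$ has no three consecutive entries $\tau_j<\tau_{j+1}<\tau_{j+2}$ and $\tau$ avoids the classical pattern $132$.
   Context: $\mathfrak S_n$ is the set of permutations of $\{1,\dots,n\}$. A vincular pattern is a permutation with some entries underlined; a sequence contains it if it has a subsequence with the same relative order in which entries corresponding to adjacent underlined entries occupy consecutive positions. E.g. an occurrence of $\underline{32}1$ is $a_j a_{j+1} a_l$ with $l>j+1$ and $a_l<a_{j+1}<a_j$. $\mathrm{Av}_n(\dots)$ is the set of permutations of $\mathfrak S_n$ avoiding all listed patterns. For a pattern $\sigma$, the map $\mathrm{SC}_\sigma$ acts on $\tau$: read entries left to right; when the next entry $x$ is read, if pushing $x$ yields a stack whose entries read top to bottom (stack adjacency = consecutive positions) avoid $\sigma$, push $x$; otherwise pop the top stack entry to the output and repeat. At the end pop all remaining entries to the output; the output is $\mathrm{SC}_\sigma(\tau)$. West's stack-sorting map is $s=\mathrm{SC}_{21}$. $\mathrm{Sort}_n(\mathrm{SC}_\sigma)=\{\tau\in\mathfrak S_n : s(\mathrm{SC}_\sigma(\tau))=12\cdots n\}$. *)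

(* Defs.v *)
From mathcomp Require Import all_boot.
Set Implicit Arguments. Unset Strict Implicit. Unset Printing Implicit Defensive.

(* Sequences of positive naturals; a permutation of [n] is a seq tau with
   perm_eq tau (iota 1 n).  Positions are 0-based internally. *)

Fixpoint subseqs (T : Type) (s : seq T) : seq (seq T) :=
  match s with
  | [::] => [:: [::]]
  | x :: t => let r := subseqs t in [seq x :: u | u <- r] ++ r
  end.

(* A vincular pattern: the pattern p (a permutation, as a seq) together with
   the list adj of 0-based positions i such that pattern entries i and i+1
   are underlined together (must occupy consecutive positions). *)
Record vpattern := VPat { vp_perm : seq nat; vp_adj : seq nat }.

Definition vcontains (sg : vpattern) (s : seq nat) : bool :=
  let p := vp_perm sg in
  has (fun idx : seq nat =>
         [&& size idx == size p,
             all (fun i => all (fun j =>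
                   (nth 0 s (nth 0 idx i) < nth 0 s (nth 0 idx j))
                   == (nth 0 p i < nth 0 p j)) (iota 0 (size p)))
                 (iota 0 (size p))
           & all (fun i => nth 0 idx i.+1 == (nth 0 idx i).+1) (vp_adj sg)])
      (subseqs (iota 0 (size s))).

Definition vavoids (sg : vpattern) (s : seq nat) : bool := ~~ vcontains sg s.

Definition pat21 : vpattern := VPat [:: 2; 1] [::].
Definition pat32_1 : vpattern := VPat [:: 3; 2; 1] [:: 0].
Definition pat123u : vpattern := VPat [:: 1; 2; 3] [:: 0; 1].
Definition pat132 : vpattern := VPat [:: 1; 3; 2] [::].

(* One step of the pattern-avoiding stack machine: stack st is listed top to
   bottom (head = top), out is the output so far in reverse order.  To read x:
   if pushing x yields a stack avoiding sg, push; otherwise pop the top to the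
   output and repeat.  (On an empty stack x is pushed: a one-entry stack avoids
   every pattern of length >= 2.) *)
Fixpoint sc_read (sg : vpattern) (st out : seq nat) (x : nat)
  : seq nat * seq nat :=
  match st with
  | [::] => ([:: x], out)
  | y :: st' =>
      if vavoids sg (x :: st) then (x :: st, out)
      else sc_read sg st' (y :: out) x
  end.

Fixpoint sc_run (sg : vpattern) (st out : seq nat) (tau : seq nat) : seq nat :=
  match tau with
  | [::] => rev out ++ st
  | x :: t => let: (st', out') := sc_read sg st out x in sc_run sg st' out' t
  end.

Definition SC (sg : vpattern) (tau : seq nat) : seq nat := sc_run sg [::] [::] tau.

Definition west_s (tau : seq nat) : seq nat := SC pat21 tau.

Definition is_perm_n (n : nat) (tau : seq nat) : Prop := perm_eq tau (iota 1 n).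

Definition Sort_n (sg : vpattern) (n : nat) (tau : seq nat) : Prop :=
  is_perm_n n tau /\ west_s (SC sg tau) = iota 1 n.

Definition Av_n (pats : seq vpattern) (n : nat) (tau : seq nat) : Prop :=
  is_perm_n n tau /\ all (fun q => vavoids q tau) pats.

Example t1 : west_s [:: 2;3;1] = [:: 2;1;3]. Proof. by []. Qed.
Example t2 : vcontains pat132 [:: 1;3;2] && vavoids pat123u [:: 1;3;2;4] && vcontains pat123u [:: 2;1;3;4]. Proof. by []. Qed.
Example t3 : vcontains pat32_1 [:: 3;2;1] && vavoids pat32_1 [:: 3;1;2] && vcontains pat32_1 [::3;2;4;1]. Proof. by []. Qed.
Example t4 : SC pat32_1 [:: 2;3;1] = [:: 1;3;2] /\ SC pat32_1 [:: 1;2;3;4] = [:: 2;3;4;1] /\ west_s [:: 3;1;2] = [:: 1;2;3]. Proof. by []. Qed.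

(* Main.v *)
Require Import Defs.
From mathcomp Require Import all_boot.
From mathcomp Require Import zify.
Set Implicit Arguments. Unset Strict Implicit. Unset Printing Implicit Defensive.

Lemma mem_subseqs_iota N a u :
  (u \in subseqs (iota a N)) = sorted ltn u && all (fun x => a <= x < a + N) u.
Proof.
elim: N a u => [|N IH] a u /=.
  case: u => [|x v] //=; rewrite in_cons orbF addn0.
  by case: (leqP a x) => H; rewrite ?andbF ?andbT //= ltnNge H.
rewrite mem_cat IH.
case: u => [|x v] /=.
  by rewrite orbT.
have -> : (x :: v \in [seq a :: u | u <- subseqs (iota a.+1 N)]) = (x == a) && (v \in subseqs (iota a.+1 N)).
  apply/mapP/andP => [[w Hw [-> ->]]|[/eqP -> Hv]]; last by exists v.
  by split.
rewrite IH (path_sortedE ltn_trans).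
apply/idP/idP.
  case/orP.
    case/andP => /eqP -> /andP [Hs Ha]; rewrite Hs leqnn /= andbT.
    apply/and3P; split.
    - by apply/allP => y /(allP Ha) /andP[].
    - lia.
    - apply/allP => y /(allP Ha) /andP[H1 H2]; apply/andP; split; lia.
  case/and3P => /andP[Hal Hs] Hx Ha; rewrite Hal Hs /=.
  apply/andP; split; first lia.
  apply/allP => y /(allP Ha) /andP[H1 H2]; apply/andP; split; lia.
case/and3P => /andP[Hal Hs] Hx Ha.
case: (eqVneq x a) => [Exa|Nxa] /=.
  apply/orP; left; rewrite Hs /=.
  apply/allP => y Hy; have := allP Ha y Hy; have := allP Hal y Hy. rewrite Exa /=.
  move=> H1 /andP[H2 H3]; apply/andP; split; lia.
rewrite Hal Hs /=; apply/andP; split.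
  have : x != a := Nxa. lia.
apply/allP => y Hy; have := allP Ha y Hy; have := allP Hal y Hy => /= H1 /andP[H2 H3].
apply/andP; split; lia.
Qed.
Lemma has_sub3 (P : seq nat -> bool) N : (forall u, P u -> size u = 3) ->
  has P (subseqs (iota 0 N)) <-> exists i j k, [/\ i < j, j < k, k < N & P [:: i; j; k]].
Proof.
move=> HS; split.
  case/hasP => u Hu Pu; rewrite mem_subseqs_iota in Hu.
  move: Hu Pu (HS u Pu); case: u => [|i [|j [|k [|]]]] //=.
  move=> H HP _; exists i, j, k; split => //; lia.
move=> [i [j [k [Hij Hjk Hk HP]]]]; apply/hasP; exists [:: i; j; k] => //.
rewrite mem_subseqs_iota /=; lia.
Qed.
Lemma has_sub2 (P : seq nat -> bool) N : (forall u, P u -> size u = 2) ->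
  has P (subseqs (iota 0 N)) <-> exists i j, [/\ i < j, j < N & P [:: i; j]].
Proof.
move=> HS; split.
  case/hasP => u Hu Pu; rewrite mem_subseqs_iota in Hu.
  move: Hu Pu (HS u Pu); case: u => [|i [|j [|]]] //=.
  move=> H HP _; exists i, j; split => //; lia.
move=> [i [j [Hij Hk HP]]]; apply/hasP; exists [:: i; j] => //.
rewrite mem_subseqs_iota /=; lia.
Qed.

Definition occ321 (s : seq nat) := exists i k, [/\ i.+1 < k, k < size s,
   nth 0 s i.+1 < nth 0 s i & nth 0 s k < nth 0 s i.+1].
Definition occ123u (s : seq nat) := exists i, [/\ i.+2 < size s,
   nth 0 s i < nth 0 s i.+1 & nth 0 s i.+1 < nth 0 s i.+2].
Definition occ21 (s : seq nat) := exists i j, [/\ i < j, j < size s & nth 0 s j < nth 0 s i].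

Lemma c321 s : vcontains pat32_1 s <-> occ321 s.
Proof.
rewrite /vcontains has_sub3; last by move=> u /andP[/eqP ->].
split.
  move=> [i [j [k [Hij Hjk Hk HP]]]]; exists i, k.
  move: HP => /=. rewrite !ltnn /= andbT => /and3P[HP /eqP Ej _]; subst j; split => //; lia.
move=> [i [k [H1 H2 H3 H4]]]; exists i, i.+1, k; split => //.
rewrite /= !ltnn /= eqxx andbT. lia.
Qed.

Lemma c123u s : vcontains pat123u s <-> occ123u s.
Proof.
rewrite /vcontains has_sub3; last by move=> u /andP[/eqP ->].
split.
  move=> [i [j [k [Hij Hjk Hk HP]]]]; exists i.
  move: HP => /=. rewrite !ltnn /= => /and4P[HP /eqP Ej /eqP Ek _]; subst j k; split => //; lia.
move=> [i [H2 H3 H4]]; exists i, i.+1, i.+2; split => //.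
rewrite /= !ltnn /= !eqxx andbT. lia.
Qed.

Lemma c21 s : vcontains pat21 s <-> occ21 s.
Proof.
rewrite /vcontains has_sub2; last by move=> u /andP[/eqP ->].
split.
  move=> [i [j [Hij Hk HP]]]; exists i, j.
  move: HP => /=. rewrite !ltnn /= => HP; split => //; lia.
move=> [i [j [H2 H3 H4]]]; exists i, j; split => //.
rewrite /= !ltnn /=. lia.
Qed.

Fixpoint rec321 (s : seq nat) : bool :=
  match s with
  | a :: ((b :: t) as s') => ((b < a) && has (fun c => c < b) t) || rec321 s'
  | _ => false
  end.

Lemma occ321_rec s : occ321 s <-> rec321 s.
Proof.
elim: s => [|a s IH].
  split => //; by move=> [i [k [_ /= ]]].
case: s IH => [|b t] IH.
  split => //; move=> [i [k [H1 H2 _ _]]] /=; move: H2 => /=; lia.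
change (occ321 [:: a, b & t] <-> ((b < a) && has (fun c => c < b) t) || rec321 (b :: t)).
split.
  move=> [[|i] [k [H1 H2 H3 H4]]].
    apply/orP; left; apply/andP; split => //.
    apply/(has_nthP 0); exists (k - 2); first by move: H2 => /=; lia.
    by move: H4; case: k H1 {H2} => [|[|k]] //= _; rewrite subn2.
  apply/orP; right; apply/IH; exists i, k.-1; split => //; move: H2 H3 H4 => /=; try lia.
  by case: k H1 => [|k] //=; lia.
case/orP.
  case/andP => Hba /(has_nthP 0) [k Hk Hkb]; exists 0, k.+2; split => //=; lia.
move/IH=> [i [k [H1 H2 H3 H4]]]; exists i.+1, k.+1; split => //=; lia.
Qed.

Lemma read_shape sg st out x : exists k, k <= size st /\
  sc_read sg st out x = (x :: drop k st, rev (take k st) ++ out).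
Proof.
elim: st out => [|y st IH] out /=; first by exists 0.
case: ifP => _; first by exists 0; rewrite drop0 take0.
have [k [Hk ->]] := IH (y :: out); exists k.+1; split => //.
by rewrite /= rev_cons cat_rcons.
Qed.

Lemma read_push sg st out x : (st = [::] \/ vavoids sg (x :: st)) ->
  sc_read sg st out x = (x :: st, out).
Proof. by case: st => [|y st] /= [] // ->. Qed.

Definition sc_state sg (p : seq nat * seq nat) t :=
  foldl (fun p x => sc_read sg p.1 p.2 x) p t.

Lemma sc_run_state sg st out t :
  sc_run sg st out t = rev (sc_state sg (st, out) t).2 ++ (sc_state sg (st, out) t).1.
Proof.
elim: t st out => [|x t IH] st out //=.
case E: (sc_read sg st out x) => [st' out']; by rewrite IH.
Qed.

Lemma state_shape sg st out t : exists w, (sc_state sg (st, out) t).2 = w ++ out.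
Proof.
elim: t st out => [|x t IH] st out /=; first by exists [::].
have [k [_ ->]] := read_shape sg st out x.
have [w ->] := IH (x :: drop k st) (rev (take k st) ++ out).
by exists (w ++ rev (take k st)); rewrite catA.
Qed.

Lemma read_seq sg st out x : exists k, k <= size st /\
  rev (sc_read sg st out x).2 ++ (sc_read sg st out x).1 = rev out ++ take k st ++ x :: drop k st.
Proof.
have [k [Hk ->]] := read_shape sg st out x; exists k; split => //=.
by rewrite rev_cat revK catA.
Qed.

Lemma read_subseq sg st out x :
  subseq (rev out ++ st) (rev (sc_read sg st out x).2 ++ (sc_read sg st out x).1).
Proof.
have [k [_ ->]] := read_seq sg st out x.
rewrite cat_subseq // -{1}(cat_take_drop k st) cat_subseq //.
exact: subseq_cons.
Qed.

Lemma read_perm sg st out x :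
  perm_eq (rev (sc_read sg st out x).2 ++ (sc_read sg st out x).1) (rev out ++ st ++ [:: x]).
Proof.
have [k [_ ->]] := read_seq sg st out x.
rewrite perm_cat2l -{3}(cat_take_drop k st) -catA perm_cat2l.
by rewrite -cat1s perm_catC.
Qed.

Lemma run_subseq sg st out t : subseq (rev out ++ st) (sc_run sg st out t).
Proof.
elim: t st out => [|x t IH] st out //=.
have := read_subseq sg st out x.
case E: (sc_read sg st out x) => [st' out'] /= H.
exact: subseq_trans H (IH _ _).
Qed.

Lemma run_perm sg st out t : perm_eq (sc_run sg st out t) (rev out ++ st ++ t).
Proof.
elim: t st out => [|x t IH] st out /=; first by rewrite cats0.
have := read_perm sg st out x.
case E: (sc_read sg st out x) => [st' out'] /= H.
apply: perm_trans (IH _ _) _.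
rewrite catA (perm_trans (perm_cat H (perm_refl t))) //.
by rewrite -!catA /=.
Qed.

Lemma SC_perm sg t : perm_eq (SC sg t) t.
Proof. by have := run_perm sg [::] [::] t. Qed.

Lemma state_perm sg st out t :
  perm_eq (rev (sc_state sg (st, out) t).2 ++ (sc_state sg (st, out) t).1) (rev out ++ st ++ t).
Proof.
have := run_perm sg st out t; by rewrite sc_run_state.
Qed.

Lemma avoid321 s : vavoids pat32_1 s = ~~ rec321 s.
Proof.
rewrite /vavoids; congr (~~ _); apply/idP/idP => H.
  by apply/occ321_rec/c321.
by apply/c321/occ321_rec.
Qed.

Lemma rec321_cat u s : rec321 s -> rec321 (u ++ s).
Proof.
elim: u => [|a u IH] //= H.
have := IH H; case: (u ++ s) => [|b t] //= ->; by rewrite orbT.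
Qed.

Lemma nopop t st out : ~~ rec321 (rev t ++ st) ->
  sc_run pat32_1 st out t = rev out ++ rev t ++ st.
Proof.
elim: t st out => [|x t IH] st out /=; first by [].
rewrite rev_cons cat_rcons => H.
rewrite read_push; last first.
  case: st H => [|y st] H; [by left | right].
  rewrite avoid321; apply: contra H; exact: rec321_cat.
by rewrite IH // rev_cons cat_rcons.
Qed.

Lemma read_inv st out x : ~~ rec321 (sc_read pat32_1 st out x).1.
Proof.
elim: st out => [|y st IH] out //=.
by case: ifP => //; rewrite avoid321.
Qed.

Lemma min_exists (s : seq nat) : s != [::] -> exists2 m, m \in s & all (fun z => m <= z) s.
Proof.
elim: s => [|a s IH] // _.
case: (eqVneq s [::]) => [->|Hs]; first by exists a; rewrite ?inE //= leqnn.
have [m Hm Ha] := IH Hs.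
case: (leqP a m) => H.
  exists a; first by rewrite inE eqxx.
  rewrite /= leqnn /=; apply/allP => z /(allP Ha); lia.
exists m; first by rewrite inE Hm orbT.
rewrite /= Ha andbT; lia.
Qed.

Lemma read_min st out x m : ~~ rec321 st -> m \in st -> all (fun z => m <= z) st ->
  exists st'', (sc_read pat32_1 st out x).1 = x :: st'' /\ m \in st''.
Proof.
elim: st out => [|y st IH] out // Hr Hm Ha /=.
case: ifP => [_|]; first by exists (y :: st).
rewrite avoid321 => /negbFE /= /orP [|Hc]; last by move: Hr; rewrite /= Hc.
case/andP => _ Hh.
have Hmy : m != y.
  apply/eqP => Emy; subst m.
  case/hasP: Hh => z Hz Hzy; move/allP: Ha => /(_ z); rewrite inE Hz orbT => /(_ isT); lia.
apply: IH.
- apply: contra Hr => H; exact: (rec321_cat [:: y] H).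
- by move: Hm; rewrite inE (negbTE Hmy).
- by move: Ha => /= /andP[].
Qed.

Lemma read_pop st out x : ~~ rec321 st -> rec321 (x :: st) ->
  exists y m, m < y < x /\
   subseq [:: y; x; m] (rev (sc_read pat32_1 st out x).2 ++ (sc_read pat32_1 st out x).1).
Proof.
case: st => [|y rest] // Hr /= /orP [|Hc]; last by move: Hr; rewrite /= Hc.
case/andP => Hyx Hh.
have [m Hm Ha] : exists2 m, m \in rest & all (fun z => m <= z) rest.
  apply: min_exists; by case: rest Hh {Hr}.
have Hmy : m < y.
  case/hasP: Hh => z Hz Hzy; move/allP: Ha => /(_ z Hz); lia.
exists y, m; split; first lia.
have -> : vavoids pat32_1 [:: x, y & rest] = false.
  by rewrite avoid321 /= Hyx Hh.
have Hr' : ~~ rec321 rest by apply: contra Hr => H; exact: (rec321_cat [:: y] H).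
have [st'' [E1 Hm']] := read_min (y :: out) x Hr' Hm Ha.
have [k [_ E]] := read_shape pat32_1 rest (y :: out) x.
move: E1; rewrite E /= => -[E2].
rewrite E2 rev_cat revK rev_cons cat_rcons -[[:: y, x & [:: m]]]cat0s.
rewrite -catA cat_subseq ?sub0seq //= eqxx -[[:: x; m]]cat0s cat_subseq ?sub0seq //=.
by rewrite eqxx sub1seq.
Qed.

Lemma pop_run t st out : ~~ rec321 st -> rec321 (rev t ++ st) ->
  exists y x m, m < y < x /\ subseq [:: y; x; m] (sc_run pat32_1 st out t).
Proof.
elim: t st out => [|x t IH] st out /=; first by move=> H1 H2; rewrite H2 in H1.
rewrite rev_cons cat_rcons => Hst H.
case: (boolP (rec321 (x :: st))) => Hx.
  have [y [m [Hlt Hsub]]] := read_pop out Hst Hx.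
  exists y, x, m; split => //.
  case E: (sc_read pat32_1 st out x) => [st' out']; rewrite E /= in Hsub.
  exact: subseq_trans Hsub (run_subseq _ _ _ _).
rewrite read_push; last first.
  case: st {H Hst} Hx => [|y st] Hx; [by left | right].
  by rewrite avoid321.
exact: IH.
Qed.

Lemma sorted_noocc21 s : sorted leq s -> ~ occ21 s.
Proof.
move=> Hs [i [j [Hij Hj Hlt]]].
have := sorted_leq_nth leq_trans leqnn 0 Hs; move=> /(_ i j).
rewrite !inE => /(_ ltac:(lia) Hj ltac:(lia)); lia.
Qed.

Lemma avoid21_cons x z rest : sorted leq (z :: rest) ->
  vavoids pat21 [:: x, z & rest] = (x <= z).
Proof.
move=> Hs; apply/idP/idP.
  apply: contraLR; rewrite -ltnNge => H; rewrite negbK; apply/c21.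
  exists 0, 1; split => //=.
move=> Hxz; apply/negP => /c21; apply: sorted_noocc21 => /=.
by rewrite Hxz.
Qed.

Lemma read_sorted21 st out x : sorted leq st -> sorted leq (sc_read pat21 st out x).1.
Proof.
elim: st out => [|z rest IH] out //= Hs.
case: ifP => [|_].
  by rewrite avoid21_cons //= => ->.
apply: IH; exact: path_sorted Hs.
Qed.

Lemma state_sorted21 t p : sorted leq p.1 -> sorted leq (sc_state pat21 p t).1.
Proof.
elim: t p => [|x t IH] [st out] //= Hs.
apply: IH; exact: read_sorted21.
Qed.

Lemma pop21 st out x y : sorted leq st -> y \in st -> y < x ->
  y \in (sc_read pat21 st out x).2.
Proof.
elim: st out => [|z rest IH] out //= Hs Hy Hyx.
case: ifP => [|_].
  rewrite avoid21_cons // => Hxz.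
  move: Hy; rewrite inE => /orP [/eqP Eyz|Hy]; first lia.
  move: Hs; rewrite /= (path_sortedE leq_trans) => /andP [/allP /(_ y Hy) H _]; lia.
move: Hy; rewrite inE => /orP [/eqP ->|Hy].
  have [k [_ ->]] := read_shape pat21 rest (z :: out) x.
  by rewrite mem_cat inE eqxx orbT.
exact: IH (z :: out) (path_sorted Hs) Hy Hyx.
Qed.

Lemma sub_split1 (x : nat) (w s : seq nat) : subseq (x :: w) s -> exists C B, s = C ++ x :: B /\ subseq w B.
Proof.
elim: s => [|z s IH] //=.
case: (eqVneq x z) => [<-|Hne] H.
  by exists [::], s.
have [C [B [-> HB]]] := IH H; by exists (z :: C), B.
Qed.

Lemma sub_split2 (y x : nat) (w s : seq nat) : subseq (y :: x :: w) s ->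
  exists A B, [/\ s = A ++ x :: B, y \in A & subseq w B].
Proof.
elim: s => [|z s IH] //=.
case: (eqVneq y z) => [<-|Hne] H.
  have [C [B [-> HB]]] := sub_split1 H.
  by exists (y :: C), B; rewrite inE eqxx.
have [A [B [-> HA HB]]] := IH H; exists (z :: A), B; split => //.
by rewrite inE HA orbT.
Qed.

Lemma west1 (s : seq nat) (y x m : nat) : uniq s -> subseq [:: y; x; m] s -> m < y < x ->
  ~ sorted ltn (west_s s).
Proof.
move=> Hu Hsub Hlt Hsort.
have [A [B [Es HyA HmB]]] := sub_split2 Hsub.
rewrite sub1seq in HmB.
move: Hsort; rewrite /west_s /SC sc_run_state Es /sc_state foldl_cat /=.
set p1 := foldl _ _ A.
have Hp1perm : perm_eq (rev p1.2 ++ p1.1) A.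
  by have := state_perm pat21 [::] [::] A.
have Hp1s : sorted leq p1.1 by exact: (@state_sorted21 A ([::], [::]) isT).
have Hy2 : y \in (sc_read pat21 p1.1 p1.2 x).2.
  have := perm_mem Hp1perm y; rewrite HyA mem_cat mem_rev => /orP [H|H].
    by have [k [_ ->]] := read_shape pat21 p1.1 p1.2 x; rewrite mem_cat H orbT.
  apply: pop21 => //; lia.
have Hp2perm : perm_eq (rev (sc_read pat21 p1.1 p1.2 x).2 ++ (sc_read pat21 p1.1 p1.2 x).1) (A ++ [:: x]).
  apply: perm_trans (read_perm _ _ _ _) _; rewrite catA perm_cat2r //.
case E: (sc_read pat21 p1.1 p1.2 x) => [st2 out2]; rewrite E /= in Hy2 Hp2perm.
have Hm2 : m \notin out2.
  apply/negP => Hm.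
  have := perm_mem Hp2perm m; rewrite mem_cat mem_rev Hm /= mem_cat inE => /esym /orP [HmA|/eqP Emx]; last lia.
  move: Hu; rewrite Es cat_uniq => /and3P [_ /hasP [] ]; exists m => //.
  by rewrite inE HmB orbT.
have := state_shape pat21 st2 out2 B; rewrite /sc_state => -[w Ew].
have Hfin := state_perm pat21 st2 out2 B; rewrite /sc_state in Hfin.
rewrite Ew rev_cat -catA => Hsort.
have Hmin : m \in rev w ++ (foldl (fun p x => sc_read pat21 p.1 p.2 x) (st2, out2) B).1.
  have := perm_mem Hfin m; rewrite Ew rev_cat -catA mem_cat mem_rev (negbTE Hm2) /=.
  by rewrite !mem_cat HmB !orbT.
have : subseq [:: y; m] (rev out2 ++ rev w ++ (foldl (fun p x => sc_read pat21 p.1 p.2 x) (st2, out2) B).1).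
  rewrite -cat1s; apply: cat_subseq; by rewrite sub1seq ?mem_rev.
move/subseq_sorted => /(_ ltn ltn_trans Hsort) /=; rewrite andbT; lia.
Qed.

Definition no231 (t : seq nat) := ~ exists a b c, subseq [:: a; b; c] t /\ c < a < b.

Definition inv (st out t : seq nat) : Prop :=
 [/\ sorted leq st, sorted leq (rev out),
     (forall o z, o \in out -> z \in st ++ t -> o <= z),
     (forall z, z \in st -> ~ exists a b, subseq [:: a; b] t /\ b < z < a)
   & no231 t].

Lemma no231_cons x t : no231 (x :: t) -> no231 t.
Proof.
move=> H [a [b [c [Hs Hl]]]]; apply: H; exists a, b, c; split => //.
exact: subseq_trans Hs (subseq_cons _ _).
Qed.

Lemma no231_top x t : no231 (x :: t) -> ~ exists a b, subseq [:: a; b] t /\ b < x < a.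
Proof.
move=> H [a [b [Hs Hl]]]; apply: H; exists x, a, b; split => //.
by rewrite /= eqxx.
Qed.

Lemma sub2_cons x t : (~ exists a b, subseq [:: a; b] (x :: t) /\ x < x) -> True.
Proof. by []. Qed.

Lemma nopat_cons z x t : (~ exists a b, subseq [:: a; b] (x :: t) /\ b < z < a) ->
  ~ exists a b, subseq [:: a; b] t /\ b < z < a.
Proof.
move=> H [a [b [Hs Hl]]]; apply: H; exists a, b; split => //.
exact: subseq_trans Hs (subseq_cons _ _).
Qed.

Lemma sorted_rcons_leq (s : seq nat) z : sorted leq s -> (forall o, o \in s -> o <= z) ->
  sorted leq (rcons s z).
Proof.
move=> Hs Ho; rewrite -cats1 sorted_pairwise; last exact: leq_trans.
rewrite pairwise_cat -sorted_pairwise; last exact: leq_trans.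
rewrite Hs /= andbT; apply/allrelP => o w Ho' /=; rewrite inE => /eqP ->; exact: Ho.
Qed.

Lemma inv_read st out x t : inv st out (x :: t) ->
  inv (sc_read pat21 st out x).1 (sc_read pat21 st out x).2 t.
Proof.
elim: st out => [|z rest IH] out [Hs Hr Hc Hd He] /=.
  split => //.
  - by move=> w; rewrite inE => /eqP ->; apply: no231_top.
  - exact: no231_cons He.
case: ifP => [|Hav].
  rewrite avoid21_cons // => Hxz; split => //.
  - by rewrite /= Hxz.
  - move=> o w Ho Hw; apply: Hc => //; move: Hw; rewrite /= !inE !mem_cat !inE.
    by case/orP => [->|/orP[->|/orP[->|->]]]; rewrite ?orbT.
  - move=> w; rewrite inE => /orP [/eqP ->|Hw]; first exact: no231_top.
    apply: nopat_cons; exact: Hd.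
  - exact: no231_cons He.
move: Hav => /negbT; rewrite avoid21_cons // -ltnNge => Hzx.
apply: IH; split.
- exact: path_sorted Hs.
- rewrite rev_cons; apply: sorted_rcons_leq => // o; rewrite mem_rev => Ho.
  by apply: Hc => //; rewrite inE eqxx.
- move=> o w; rewrite inE => /orP [/eqP ->|Ho] Hw.
  + move: Hw; rewrite mem_cat inE => /orP [Hw|/orP [/eqP ->|Hw]].
    * by move: Hs; rewrite /= (path_sortedE leq_trans) => /andP [/allP /(_ w Hw) H _].
    * exact: ltnW.
    * case: (leqP z w) => // Hwz; exfalso.
      apply: (Hd z (mem_head _ _)); exists x, w; split; last lia.
      by rewrite /= eqxx sub1seq.
  + apply: Hc => //; move: Hw; rewrite !mem_cat !inE; case/orP => ->; by rewrite ?orbT.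
- by move=> w Hw; apply: Hd; rewrite inE Hw orbT.
- exact: He.
Qed.

Lemma inv_run st out t : inv st out t -> sorted leq (sc_run pat21 st out t).
Proof.
elim: t st out => [|x t IH] st out /=.
  move=> [Hs Hr Hc _ _]; rewrite sorted_pairwise; last exact: leq_trans.
  rewrite pairwise_cat -!sorted_pairwise; try exact: leq_trans.
  apply/and3P; split => //; apply/allrelP => o z; rewrite mem_rev => Ho Hz.
  by apply: Hc => //; rewrite cats0.
move=> H; have := inv_read H.
case E: (sc_read pat21 st out x) => [st' out'] /= H'.
exact: IH.
Qed.

Lemma west2 s n : perm_eq s (iota 1 n) -> no231 s -> west_s s = iota 1 n.
Proof.
move=> Hp Hn.
have Hs : sorted leq (west_s s).
  apply: inv_run; split => //.
apply: (sorted_eq leq_trans anti_leq Hs (iota_sorted 1 n)).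
exact: perm_trans (SC_perm _ _) Hp.
Qed.

Lemma nth_rev' (s : seq nat) p q : p < size s -> q = size s - p.+1 ->
  nth 0 (rev s) p = nth 0 s q.
Proof. by move=> Hp ->; rewrite nth_rev. Qed.

Lemma sub_cons_nth (s u : seq nat) i : i < size s -> subseq u (drop i.+1 s) ->
  subseq (nth 0 s i :: u) s.
Proof.
move=> Hi Hu; rewrite -[s in subseq _ s](cat_take_drop i) (drop_nth 0 Hi).
by rewrite -[_ :: u]cat0s cat_subseq ?sub0seq //= eqxx.
Qed.

Lemma nth_subseq3 (s : seq nat) i j k : i < j -> j < k -> k < size s ->
  subseq [:: nth 0 s i; nth 0 s j; nth 0 s k] s.
Proof.
move=> Hij Hjk Hk.
apply: sub_cons_nth; first lia.
have -> : nth 0 s j = nth 0 (drop i.+1 s) (j - i.+1) by rewrite nth_drop; congr nth; lia.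
apply: sub_cons_nth; first by rewrite size_drop; lia.
rewrite drop_drop sub1seq.
have -> : nth 0 s k = nth 0 (drop (j - i.+1).+1 (drop i.+1 s)) (k - j.+1).
  by rewrite drop_drop nth_drop; congr nth; lia.
rewrite drop_drop; apply: mem_nth; rewrite size_drop; move: Hk; set N := size _ => Hk; lia.
Qed.

Lemma sub_head (a : nat) (w s : seq nat) : subseq (a :: w) s ->
  exists i, [/\ i < size s, nth 0 s i = a & subseq w (drop i.+1 s)].
Proof.
elim: s => [|z s IH] //=.
case: (eqVneq a z) => [<-|Hne] H.
  by exists 0; rewrite drop0.
have [i [H1 H2 H3]] := IH H; exists i.+1; split => //.
Qed.

Lemma subseq3_nth (s : seq nat) a b c : subseq [:: a; b; c] s ->
  exists i j k, [/\ i < j, j < k, k < size s &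
    [/\ nth 0 s i = a, nth 0 s j = b & nth 0 s k = c]].
Proof.
move=> /sub_head [i [Hi Ha /sub_head [j [Hj Hb /sub_head [k [Hk Hc _]]]]]].
move: Hj Hb Hk Hc; rewrite size_drop nth_drop drop_drop size_drop nth_drop => Hj Hb Hk Hc.
exists i, (i.+1 + j), (j.+1 + i.+1 + k); split; try lia.
split => //.
Qed.

Definition occ132 (s : seq nat) := exists i j k, [/\ i < j, j < k, k < size s &
   nth 0 s i < nth 0 s k < nth 0 s j].
Lemma c132 s : vcontains pat132 s <-> occ132 s.
Proof.
rewrite /vcontains has_sub3; last by move=> u /andP[/eqP ->].
split => -[i [j [k [Hij Hjk Hk HP]]]]; exists i, j, k; split => //.
  move: HP => /=. rewrite !ltnn /=. lia.
rewrite /= !ltnn /=. lia.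
Qed.

Unset Implicit Arguments.

Theorem mainTheorem5 (n : nat) : 0 < n ->
  forall tau : seq nat,
    Sort_n pat32_1 n tau <-> Av_n [:: pat123u; pat132] n tau.
Proof.
move=> _ tau; rewrite /Sort_n /Av_n /is_perm_n /=.
split => [[Hp Hw] | [Hp Hav]]; split => //.
  have Hu : uniq tau by rewrite (perm_uniq Hp) iota_uniq.
  have Hnr : ~~ rec321 (rev tau).
    apply/negP => Hr.
    have := @pop_run tau [::] [::] isT; rewrite cats0 => /(_ Hr) [y [x [m [Hl Hs]]]].
    apply: (west1 _ Hs Hl); last by rewrite /SC in Hw; rewrite Hw; exact: iota_ltn_sorted.
    by rewrite (perm_uniq (run_perm _ _ _ _)).
  have HSC : SC pat32_1 tau = rev tau by rewrite /SC nopop ?cats0.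
  rewrite HSC in Hw.
  have H231 : no231 (rev tau).
    move=> [a [b [c [Hs Hl]]]]; apply: (west1 _ Hs Hl); first by rewrite rev_uniq.
    rewrite Hw; exact: iota_ltn_sorted.
  apply/andP; split; last rewrite andbT.
    apply/negP => /c123u [i [H1 H2 H3]].
    move: H1 H2 H3; set N := size tau => H1 H2 H3.
    apply: (negP Hnr); apply/occ321_rec.
    exists (N - i.+3), (N - i.+1); rewrite size_rev -/N.
    rewrite (@nth_rev' tau (N - i.+3) i.+2) ?(@nth_rev' tau (N - i.+3).+1 i.+1) ?(@nth_rev' tau (N - i.+1) i) -/N; try lia.
    split => //; lia.
  apply/negP => /c132 [i [j [k [H1 H2 H3 H4]]]].
  move: H1 H2 H3 H4; set N := size tau => H1 H2 H3 H4.
  apply: H231; exists (nth 0 tau k), (nth 0 tau j), (nth 0 tau i); split; last lia.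
  have := @nth_subseq3 (rev tau) (N - k.+1) (N - j.+1) (N - i.+1).
  rewrite size_rev -/N.
  rewrite (@nth_rev' tau (N - k.+1) k) ?(@nth_rev' tau (N - j.+1) j) ?(@nth_rev' tau (N - i.+1) i) -/N; try lia.
  apply; lia.
have Hu : uniq tau by rewrite (perm_uniq Hp) iota_uniq.
move: Hav => /andP [Hav1 /andP [Hav2 _]].
have Hnr : ~~ rec321 (rev tau).
  apply/negP => /occ321_rec [p [q [H1 H2 H3 H4]]].
  move: H1 H2 H3 H4; rewrite size_rev; set N := size tau => H1 H2 H3 H4.
  have [a [b [Hab Hb Ha1 Ha2]]] : exists a b, [/\ a < b, b.+1 < N,
      nth 0 tau a < nth 0 tau b & nth 0 tau b < nth 0 tau b.+1].
    exists (N - q.+1), (N - p.+2).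
    move: H3 H4.
    rewrite (@nth_rev' tau p.+1 (N - p.+2)) ?(@nth_rev' tau p (N - p.+1)) ?(@nth_rev' tau q (N - q.+1)) -/N; try lia.
    have -> : (N - p.+2).+1 = N - p.+1 by lia.
    move=> H3 H4; split => //; lia.
  case: b Hab Hb Ha1 Ha2 => [|c] Hab Hb Ha1 Ha2; first lia.
  case: (ltngtP (nth 0 tau c) (nth 0 tau c.+1)) => Hc.
  - move/negP: Hav1; apply; apply/c123u; exists c; split => //.
  - case: (eqVneq a c) => [Eac|Nac].
      subst a; lia.
    move/negP: Hav2; apply; apply/c132; exists a, c, c.+1; split => //; lia.
  - have Hc1 : c < N by lia.
    have Hc2 : c.+1 < N by lia.
    have := nth_uniq 0 Hc1 Hc2 Hu.
    rewrite Hc eqxx => /esym /eqP; lia.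
have HSC : SC pat32_1 tau = rev tau by rewrite /SC nopop ?cats0.
rewrite HSC; apply: west2; first by rewrite perm_rev.
move=> [x [y [z [Hs Hl]]]].
have [i [j [k [Hij Hjk Hk [Ex Ey Ez]]]]] := subseq3_nth Hs.
move: Hk Ex Ey Ez; rewrite size_rev; set N := size tau => Hk Ex Ey Ez.
move/negP: Hav2; apply; apply/c132.
exists (N - k.+1), (N - j.+1), (N - i.+1); rewrite -/N; split; try lia.
rewrite (@nth_rev' tau k (N - k.+1)) -/N in Ez; try lia.
rewrite (@nth_rev' tau j (N - j.+1)) -/N in Ey; try lia.
rewrite (@nth_rev' tau i (N - i.+1)) -/N in Ex; try lia.
Qed.
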